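(* For all integers $m,n\ge 1$, the lexicographic product $K_{4m}\circ\overline{K_{2n+1}}$ (an odd-regular graph on $4m(2n+1)$ vertices) is orientable $\mathbb{Z}_{4m(2n+1)}$-distance magic.
   Context: For graphs $G,H$, the lexicographic product $G\circ H$ has vertex set $V(G)\times V(H)$, with $(g,h)$ adjacent to $(g',h')$ iff $g$ is adjacent to $g'$ in $G$, or $g=g'$ and $h$ is adjacent to $h'$ in $H$. $\overline{K_n}$ denotes the edgeless graph on $n$ vertices. For an oriented graph $\vec G$ and a vertex $x$, $N^+(x)$ is the set of vertices $y$ with an arc from $x$ to $y$, and $N^-(x)$ is the set of vertices $y$ with an arc from $y$ to $x$. For an Abelian group $\Gamma$ of order $n$, a directed $\Gamma$-distance magic labeling of an oriented graph $\vec G$ of order $n$ is a bijection $\vec l:V\to\Gamma$ such that there is $\mu\in\Gamma$ with $\sum_{y\in N^+(x)}\vec l(y)-\sum_{y\in N^-(x)}\vec l(y)=\mu$ for every vertex $x$. A simple graph $G$ of order $n$ is orientable $\Gamma$-distance magic if some orientation of its edges admits a directed $\Gamma$-distance magic labeling. $\mathbb{Z}_n$ is the cyclic group of integers modulo $n$. *)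

(* Defs.v *)
From HB Require Import structures.
From mathcomp Require Import all_boot all_order all_algebra.
Set Implicit Arguments. Unset Strict Implicit. Unset Printing Implicit Defensive.
Import GRing.Theory.
Local Open Scope ring_scope.

(* Simple graphs are symmetric irreflexive relations on a finite vertex type. *)

Definition complete_graph (k : nat) : rel 'I_k := fun i j => i != j.

(* Edgeless graph (complement of K_k) on vertex set 'I_k. *)
Definition edgeless_graph (k : nat) : rel 'I_k := fun _ _ => false.

Definition lexprod (T1 T2 : finType) (e1 : rel T1) (e2 : rel T2) : rel (T1 * T2) :=
  fun x y => e1 x.1 y.1 || ((x.1 == y.1) && e2 x.2 y.2).

(* a : rel T (arc relation: a x y means an arc x -> y) is an orientation of
   the simple graph e: every edge gets exactly one direction, and arcs only
   along edges. *)
Definition is_orientation (T : finType) (e a : rel T) : Prop :=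
  forall x y, e x y = (a x y || a y x) /\ ~~ (a x y && a y x).

Definition directed_distance_magic (T : finType) (Gamma : zmodType)
    (a : rel T) (l : T -> Gamma) : Prop :=
  bijective l /\
  exists mu : Gamma, forall x : T,
    \sum_(y | a x y) l y - \sum_(y | a y x) l y = mu.

Definition orientable_distance_magic (Gamma : zmodType) (T : finType)
    (e : rel T) : Prop :=
  exists a : rel T, is_orientation e a /\
  exists l : T -> Gamma, directed_distance_magic a l.

Arguments complete_graph k : clear implicits.
Arguments edgeless_graph k : clear implicits.
Arguments orientable_distance_magic Gamma {T} e.

(* Main.v *)
Require Import Defs.
From mathcomp Require Import all_boot all_order all_algebra.
From mathcomp Require Import zify.
Import GRing.Theory.

Definition pi (m j i : nat) : nat :=
  if i == 0 then 0 else
  if j == 0 then i else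
  if j == 1 then (if i <= 2* m then i + 2* m - 1 else i - 2* m) else
  if j == 2 then (if i <= 2* m then 4* m + 1 - 2*i else 8* m - 2*i) else
  if odd j then i else 4* m - i.

Lemma pi_lt m j i : 0 < m -> i < 4 * m -> pi m j i < 4 * m.
Proof.
move=> hm hi; rewrite /pi.
by repeat case: ifP => ? //=; lia.
Qed.

Lemma pi_inj m j i i' : 0 < m -> i < 4 * m -> i' < 4 * m -> pi m j i = pi m j i' -> i = i'.
Proof.
move=> hm hi hi'; rewrite /pi.
by repeat case: ifP => /= /eqP ?; lia.
Qed.

Lemma pi_sum m k i : 0 < m -> 0 < i < 4* m -> 0 < k ->
  \sum_(0 <= j < 2*k+1) pi m j i = 2* m*(2*k+1).
Proof.
move=> hm hi; elim: k => [//|k IH] _.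
case: k IH => [_|k IH].
  rewrite (_ : 2 * 1 + 1 = 3) // !big_nat_recr //= big_geq // /pi.
  have -> : (i == 0) = false by apply/eqP; lia.
  by case: ifP => /= ?; lia.
have -> : 2 * k.+2 + 1 = (2 * k.+1 + 1).+2 by lia.
rewrite big_nat_recr // big_nat_recr //= IH // /pi.
have -> : (i == 0) = false by apply/eqP; lia.
have -> : (2 * k.+1 + 1 == 0) = false by apply/eqP; lia.
have -> : (2 * k.+1 + 1 == 1) = false by apply/eqP; lia.
have -> : (2 * k.+1 + 1 == 2) = false by apply/eqP; lia.
have -> : ((2 * k.+1 + 1).+1 == 0) = false by apply/eqP; lia.
have -> : ((2 * k.+1 + 1).+1 == 1) = false by apply/eqP; lia.
have -> : ((2 * k.+1 + 1).+1 == 2) = false by apply/eqP; lia.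
have -> : odd (2 * k.+1 + 1) by rewrite !oddD !oddM.
have -> : odd (2 * k.+1 + 1).+1 = false by rewrite (_ : (2 * k.+1 + 1).+1 = 2 * k.+2) ?oddM //; lia.
lia.
Qed.

Lemma sum_lin M k : \sum_(0 <= j < 2*k+1) M * j = M * k * (2*k+1).
Proof.
elim: k => [|k IH]; first by rewrite big_nat1 muln0.
have -> : 2 * k.+1 + 1 = (2 * k + 1).+2 by lia.
rewrite big_nat_recr // big_nat_recr //= IH. nia.
Qed.

Definition orient M t (astar : 'I_M * 'I_t) (i0 : 'I_M) : rel ('I_M * 'I_t) :=
  fun x y => (x.1 != y.1) && ((x.1 < y.1)%N (+)
     (((x == astar) && (y.1 == i0)) (+) ((y == astar) && (x.1 == i0)))).

Arguments orient {M t}.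

Lemma orient_ok M t astar i0 :
  is_orientation (lexprod (complete_graph M) (edgeless_graph t)) (@orient M t astar i0).
Proof.
move=> x y; rewrite /lexprod /complete_graph /edgeless_graph /orient andbF orbF.
case: (eqVneq x.1 y.1) => [E|ne] /=; first by [].
have -> : (y.1 < x.1)%N = ~~ (x.1 < y.1)%N.
  by case: (ltngtP x.1 y.1) => // /val_inj E; rewrite E eqxx in ne.
rewrite (addbC ((y == astar) && (x.1 == i0))).
by case: (x.1 < y.1)%N; case: ((x == astar) && (y.1 == i0) (+) (y == astar) && (x.1 == i0)).
Qed.

Lemma card2 M (u v : 'I_M) : u != v ->
  #|[pred i : 'I_M | (i != u) && (i != v)]| = M - 2.
Proof.
move=> uv.
have := cardC1 u; rewrite (cardD1 v) card_ord inE eq_sym uv /= => H.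
rewrite -(@eq_card _ [predD1 predC1 u & v]).
  2: by move=> i; rewrite !inE andbC.
have -> : M - 2 = M.-1 - 1 by lia.
by rewrite -H addKn.
Qed.

Local Open Scope ring_scope.

Lemma big_const_pred (G : zmodType) n (P : pred 'I_n) (F : 'I_n -> G) b :
  (forall j, P j = b) -> \sum_(j | P j) F j = if b then \sum_j F j else 0.
Proof.
move=> H; rewrite big_mkcond; case: b H => H.
  by apply: eq_bigr => j _; rewrite H.
by rewrite big1 // => j _; rewrite H.
Qed.
Arguments big_const_pred {G n P F b}.

Lemma orient_magic M t (G : zmodType) (l : 'I_M * 'I_t -> G) astar i0 (h : G) :
  nat_of_ord i0 = 0%N -> astar.1 != i0 -> h + h = 0 ->
  (forall i, i != i0 -> \sum_j l (i,j) = h) -> \sum_j l (i0,j) = 0 ->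
  l astar + l astar = h -> ~~ odd M ->
  forall x, \sum_(y | orient astar i0 x y) l y - \sum_(y | orient astar i0 y x) l y = 0.
Proof.
move=> i00 ai0 hh Si S0 la eM x.
set o := orient astar i0.
have hN : - h = h by apply/eqP; rewrite eq_sym -subr_eq0 opprK hh.
have anti : forall y, x.1 != y.1 -> o y x = ~~ o x y.
  move=> y ne; have [H1 H2] := orient_ok M t astar i0 x y; move: H1 H2.
  rewrite /lexprod /complete_graph /edgeless_graph ne /= -/o.
  by case: (o x y); case: (o y x).
have E : forall P : pred ('I_M * 'I_t), \sum_(y | P y) l y = \sum_i \sum_(j | P (i,j)) l (i,j).
  by move=> P; rewrite pair_big_dep; apply: eq_big => -[i j].
rewrite !E -sumrB.
pose Pc := fun i : 'I_M => [&& i != x.1, i != i0 & ~~ ((x.1 == i0) && (i == astar.1))].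
transitivity (\sum_(i | Pc i) h).
  rewrite [RHS]big_mkcond; apply: eq_bigr => i _.
  case: (eqVneq i x.1) => [->|nix].
    rewrite !big_pred0 ?subrr /Pc ?eqxx //= => j; by rewrite /o /orient /= eqxx.
  have anti' : forall j, o (i,j) x = ~~ o x (i,j) by move=> j; apply: anti; rewrite eq_sym.
  rewrite [X in _ - X](eq_bigl (fun j => ~~ o x (i,j))); last by move=> j; exact: anti'.
  have oE : forall j, o x (i,j) = (x.1 < i)%N (+) (((x == astar) && (i == i0))
                         (+) (((i,j) == astar) && (x.1 == i0))).
    by move=> j; rewrite /o /orient /= eq_sym nix.
  have rowc : forall b, (forall j, o x (i,j) = b) ->
      \sum_(j | o x (i, j)) l (i, j) - \sum_(j | ~~ o x (i, j)) l (i, j) =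
      if b then \sum_j l (i,j) else - \sum_j l (i,j).
    move=> b Hb; rewrite (big_const_pred Hb) [X in _ - X](big_const_pred (b := ~~ b)); last first.
      by move=> j /=; rewrite Hb.
    by case: b {Hb} => /=; rewrite ?subr0 ?sub0r.
  case: (eqVneq x astar) => [xa|xna].
    case: (eqVneq i i0) => [ii0|ini0].
      rewrite (rowc true); last first.
        by move=> j; rewrite oE xa ii0 i00 !eqxx /= (negbTE ai0) andbF.
      by rewrite /Pc ii0 eqxx andbF /= S0.
    have ax := ai0.
    rewrite (rowc (x.1 < i)%N); last first.
      move=> j; rewrite oE xa eqxx (negbTE ini0) /=. by rewrite (negbTE ax) andbF addbF.
    have -> : Pc i by rewrite /Pc nix ini0 xa (negbTE ai0).
    by rewrite (Si _ ini0) hN; case: ifP.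
  have a0 : (0 < astar.1)%N.
    by case: (posnP astar.1) => // a0; move: ai0; rewrite -(inj_eq val_inj) /= a0 i00.
  case: (boolP ((x.1 == i0) && (i == astar.1))) => [/andP [/eqP x1 /eqP ia]|nB2].
    have Ho : forall j, o x (i,j) = (j != astar.2).
      move=> j; rewrite oE x1 ia (negbTE xna) eqxx andbT /=.
      have -> : ((astar.1, j) == astar) = (j == astar.2).
        by case: (astar) => a1 a2; rewrite /= xpair_eqE eqxx.
      by rewrite i00 a0.
    rewrite [X in X - _](eq_bigl (fun j => j != astar.2)); last by move=> j; rewrite Ho.
    rewrite [X in _ - X](eq_bigl (fun j => j == astar.2)); last first.
      by move=> j /=; rewrite Ho negbK.
    rewrite big_pred1_eq.
    have := Si _ (ai0); rewrite (bigD1 astar.2) //= => HS.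
    have -> : Pc i = false by rewrite /Pc x1 ia !eqxx /= !andbF.
    subst i; move: HS; rewrite -!surjective_pairing => HS.
    move: HS; move: (\sum_(_ < _ | _) _) => s HS.
    have -> : s = l astar by apply: (addrI (l astar)); rewrite HS la.
    by rewrite subrr.
  rewrite (rowc (x.1 < i)%N); last first.
    move=> j; rewrite oE (negbTE xna) /=.
    case: (eqVneq x.1 i0) => [x1|x1]; rewrite ?andbF ?andbT ?addbF //.
    move: nB2; rewrite x1 eqxx /= => nB2.
    have -> : ((i, j) == astar) = false.
      by apply/negbTE; move: nB2; apply: contra => /eqP <-.
    by rewrite addbF.
  case: (eqVneq i i0) => [ii0|ini0].
    subst i; by rewrite /Pc eqxx andbF /= S0 oppr0; case: ifP.
  have -> : Pc i by rewrite /Pc nix ini0.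
  by rewrite (Si _ ini0) hN; case: ifP.
rewrite sumr_const.
have cP : #|Pc| = (M - 2)%N.
  case: (eqVneq x.1 i0) => [x1|x1].
    rewrite -(@card2 M i0 astar.1); last by rewrite eq_sym.
    apply: eq_card => i.
    by rewrite unfold_in /Pc x1 eqxx /= inE; case: (i != i0).
  rewrite -(@card2 M x.1 i0 x1); apply: eq_card => i.
  by rewrite unfold_in /Pc (negbTE x1) /= inE andbT.
have M2 : (2 <= M)%N by have := ltn_ord astar.1; lia.
have [k hk] : exists k, (M - 2 = k.*2)%N.
  by exists (M - 2)./2; rewrite -[LHS]odd_double_half oddB // (negbTE eM).
rewrite (_ : #|_| = (M-2)%N); last exact: cP.
by rewrite hk -mul2n mulrnA mulr2n hh mul0rn.
Qed.

Local Close Scope ring_scope.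

Lemma decomp M a b a' b' : 0 < M -> a < M -> a' < M -> a + M * b = a' + M * b' -> a = a' /\ b = b'.
Proof.
move=> M0 ha ha' H.
have Hd : forall u v, u < M -> (u + M * v) %/ M = v.
  by move=> u v hu; rewrite addnC mulnC divnMDl // divn_small // addn0.
have Hm : forall u v, u < M -> (u + M * v) %% M = u.
  by move=> u v hu; rewrite addnC mulnC modnMDl modn_small.
split; first by rewrite -(Hm a b) // H Hm.
by rewrite -(Hd a b) // H Hd.
Qed.

Theorem mainTheorem2 (m n : nat) (hm : (1 <= m)%N) (hn : (1 <= n)%N) :
  orientable_distance_magic 'Z_(4 * m * (2 * n + 1))
    (lexprod (complete_graph (4 * m)) (edgeless_graph (2 * n + 1))).
Proof.
set N := 4 * m * (2 * n + 1).
have N1 : 1 < N by rewrite /N; nia.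
pose l := fun x : 'I_(4 * m) * 'I_(2 * n + 1) =>
  (((pi m x.2 x.1 + 4 * m * x.2)%:R)%R : 'Z_N).
have castE : forall a b, (a%:R : 'Z_N)%R = b%:R%R -> a %% N = b %% N.
  move=> a b H; have := congr1 (fun z : 'Z_N => nat_of_ord z) H.
  by rewrite /= !val_Zp_nat.
have natN : forall k, ((N * k)%:R : 'Z_N)%R = 0%R.
  by move=> k; rewrite -Zp_nat_mod // modnMr.
have ltN : forall x : 'I_(4 * m) * 'I_(2 * n + 1), pi m x.2 x.1 + 4 * m * x.2 < N.
  move=> [i j] /=; have := pi_lt m j i hm (ltn_ord i); have := ltn_ord j.
  rewrite /N; nia.
have linj : injective l.
  move=> [i j] [i' j'] /castE; rewrite !modn_small ?ltN // /=.
  move=> /decomp [] //; try (apply: pi_lt => //); try lia.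
  move=> H /val_inj hj; subst j'.
  by rewrite (val_inj (pi_inj m j i i' hm (ltn_ord i) (ltn_ord i') H)).
have lbij : bijective l.
  apply: (inj_card_bij linj).
  by rewrite card_prod !card_ord Zp_cast.
case: (lbij) => g lK gK.
set astar := g ((m * (2 * n + 1))%:R)%R.
have M0 : 0 < 4 * m by lia.
set i0 : 'I_(4 * m) := Ordinal M0.
set h : 'Z_N := ((2 * m * (2 * n + 1))%:R)%R.
have la : (l astar + l astar = h)%R.
  by rewrite /astar gK -natrD /h; congr (_%:R)%R; lia.
have hh : (h + h = 0)%R.
  by rewrite /h -natrD (_ : _ + _ = N * 1) ?natN //; rewrite /N; lia.
have ai0 : astar.1 != i0.
  apply/negP => /eqP a1.
  have := gK ((m * (2 * n + 1))%:R)%R; rewrite -/astar.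
  rewrite /l a1 /= /pi eqxx add0n => /castE.
  rewrite !modn_small; last 2 first.
  - rewrite /N; nia.
  - have := ltn_ord astar.2; rewrite /N; nia.
  move=> H; have : m * (4 * astar.2) = m * (2 * n + 1) by rewrite mulnCA mulnA H.
  by move=> /eqP; rewrite eqn_pmul2l // => /eqP; lia.
have rowsum : forall i : 'I_(4 * m), (\sum_j l (i, j) =
    ((\sum_(0 <= j < 2 * n + 1) pi m j i) + 4 * m * n * (2 * n + 1))%:R)%R.
  move=> i; rewrite -sum_lin -big_split /= natr_sum big_mkord.
  apply: eq_bigr => j _; rewrite /l. by [].
exists (orient astar i0); split; first exact: orient_ok.
exists l; split=> //; exists 0%R.
apply: (@orient_magic _ _ _ l astar i0 h) => //.
- move=> i ni0; rewrite rowsum pi_sum //; last first.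
    rewrite ltn_ord andbT lt0n; apply: contra ni0 => /eqP i0'.
    by apply/eqP/val_inj.
  rewrite natrD /h (_ : 4 * m * n * (2 * n + 1) = N * n) ?natN ?addr0 //.
  rewrite /N; lia.
- rewrite rowsum big1_seq ?add0n; last by move=> j _; rewrite /pi eqxx.
  by rewrite (_ : 4 * m * n * (2 * n + 1) = N * n) ?natN //; rewrite /N; lia.
- by rewrite oddM.
Qed.
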